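(* Let $S=\{s_1,\dots,s_p\}$ and let $F=\{C_1,\dots,C_q\}$ be a family of subsets of $S$ with $q\le p$ and $\bigcup_j C_j=S$. Construct the graph $G$ as follows: vertices $a_1,\dots,a_p$, $b_1,\dots,b_q$, $z_1,\dots,z_p$, $u,v,u'$; edges $a_ib_j$ whenever $s_i\in C_j$, $a_iz_i$ for all $i\in[p]$, $ub_j$ for all $j\in[q]$, and $uv$, $vu'$. Then $G$ is a star-convex bipartite graph with parts $X=\{a_1,\dots,a_p,u,u'\}$ and $Y=\{b_1,\dots,b_q,z_1,\dots,z_p,v\}$ (with respect to the star on $X$ centred at $u$), and for every nonnegative integer $t$, $S$ has a cover of size at most $t$ if and only if $G$ has a vertex-edge dominating set of size at most $t+1$.
   Context: A cover of $S$ in the set system $(S,F)$ is a subfamily $C\subseteq F$ whose union is $S$. A vertex-edge dominating set of a graph $G$ is a set $D\subseteq V(G)$ such that for every edge $uv$, $(N_G[u]\cup N_G[v])\cap D\neq\emptyset$, where $N_G[x]$ is the closed neighbourhood of $x$. A star is a tree with exactly one non-pendant vertex. A bipartite graph $G=(X\cup Y,E)$ is star-convex if there is a star $T$ with vertex set $X$ such that for every $y\in Y$, $N_G(y)$ induces a subtree of $T$. *)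

(* Defs.v *)
From HB Require Import structures.
From mathcomp Require Import all_boot.
Set Implicit Arguments. Unset Strict Implicit. Unset Printing Implicit Defensive.

Definition closed_nbhd (T : finType) (e : rel T) (x : T) : {set T} :=
  [set y | (y == x) || e x y].

Definition open_nbhd (T : finType) (e : rel T) (x : T) : {set T} :=
  [set y | e x y].

Definition ve_dominating (T : finType) (e : rel T) (D : {set T}) : Prop :=
  forall x y, e x y -> (closed_nbhd e x :|: closed_nbhd e y) :&: D != set0.

(* cover of S (here S = 'I_p) in the indexed set system C : 'I_q -> {set 'I_p}:
   a subfamily (given by its index set J) whose union is S *)
Definition is_cover (p q : nat) (C : 'I_q -> {set 'I_p}) (J : {set 'I_q}) : Prop :=
  \bigcup_(j in J) C j = [set: 'I_p].

Definition bipartite_with (T : finType) (e : rel T) (X Y : {set T}) : Prop :=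
  [disjoint X & Y] /\ X :|: Y = [set: T] /\
  (forall x y, e x y -> (x \in X /\ y \in Y) \/ (x \in Y /\ y \in X)).

Definition star_rel (T : finType) (X : {set T}) (c : T) : rel T :=
  fun x y => [&& x \in X, y \in X & ((x == c) && (y != c)) || ((y == c) && (x != c))].

(* A \subseteq V(tr) induces a subtree of the tree tr: nonempty and connected
   in the subgraph induced by A (an induced connected subgraph of a tree is a tree) *)
Definition induces_subtree (T : finType) (tr : rel T) (A : {set T}) : Prop :=
  A != set0 /\
  forall x y, x \in A -> y \in A ->
    connect [rel a b | [&& tr a b, a \in A & b \in A]] x y.

Definition star_convex_wrt (T : finType) (e : rel T) (X Y : {set T}) (c : T) : Prop :=
  bipartite_with e X Y /\ c \in X /\
  forall y, y \in Y -> induces_subtree (star_rel X c) (open_nbhd e y).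

Inductive vtx (p q : nat) : Type :=
| VA of 'I_p | VB of 'I_q | VZ of 'I_p | VU | VV | VU'.

Section VtxFin.
Variables p q : nat.
Definition vtx_enc (x : vtx p q) : ('I_p + 'I_q) + ('I_p + 'I_3) :=
  match x with
  | VA i => inl (inl i) | VB j => inl (inr j) | VZ i => inr (inl i)
  | VU => inr (inr (@Ordinal 3 0 isT)) | VV => inr (inr (@Ordinal 3 1 isT))
  | VU' => inr (inr (@Ordinal 3 2 isT))
  end.
Definition vtx_dec (s : ('I_p + 'I_q) + ('I_p + 'I_3)) : vtx p q :=
  match s with
  | inl (inl i) => VA _ i | inl (inr j) => VB _ j | inr (inl i) => VZ _ i
  | inr (inr k) => if val k == 0 then VU _ _ else if val k == 1 then VV _ _ else VU' _ _
  end.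
Lemma vtx_encK : cancel vtx_enc vtx_dec. Proof. by case. Qed.
HB.instance Definition _ := Finite.copy (vtx p q) (can_type vtx_encK).
End VtxFin.

Definition Gadj (p q : nat) (C : 'I_q -> {set 'I_p}) (x y : vtx p q) : bool :=
  match x, y with
  | VA i, VB j => i \in C j
  | VB j, VA i => i \in C j
  | VA i, VZ k => i == k
  | VZ k, VA i => i == k
  | VU, VB _ | VB _, VU => true
  | VU, VV | VV, VU => true
  | VV, VU' | VU', VV => true
  | _, _ => false
  end.

Definition GX (p q : nat) : {set vtx p q} :=
  [set x | match x with VA _ | VU | VU' => true | _ => false end].
Definition GY (p q : nat) : {set vtx p q} :=
  [set x | match x with VB _ | VZ _ | VV => true | _ => false end].

(* Main.v *)
Require Import Defs.
From HB Require Import structures.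
From mathcomp Require Import all_boot.

Lemma star_sub (T:finType) (X A : {set T}) c :
  c \in A -> A \subset X -> induces_subtree (star_rel X c) A.
Proof.
move=> cA AX; split; first by apply/set0Pn; exists c.
have H: forall x, x \in A ->
  connect [rel a b | [&& star_rel X c a b, a \in A & b \in A]] x c /\
  connect [rel a b | [&& star_rel X c a b, a \in A & b \in A]] c x.
  move=> x xA; case: (eqVneq x c) => [->|nxc]; first by split; apply: connect0.
  have xX := subsetP AX x xA; have cX := subsetP AX c cA.
  by split; apply: connect1;
    rewrite /= /star_rel xX cX xA cA eqxx nxc (negbTE nxc) /= ?orbT.
move=> x y xA yA; exact: connect_trans (proj1 (H x xA)) (proj2 (H y yA)).
Qed.

Theorem lemma3 (p q : nat) (C : 'I_q -> {set 'I_p})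
  (hqp : q <= p) (hcov : \bigcup_(j < q) C j = [set: 'I_p]) :
  star_convex_wrt (@Gadj p q C) (GX p q) (GY p q) (VU p q) /\
  forall t : nat,
    (exists J : {set 'I_q}, is_cover C J /\ #|J| <= t) <->
    (exists D : {set vtx p q}, ve_dominating (@Gadj p q C) D /\ #|D| <= t.+1).
Proof.
have hc : forall i, exists j, i \in C j.
  move=> i; have : i \in \bigcup_(j < q) C j by rewrite hcov inE.
  by case/bigcupP => j _ ij; exists j.
split.
  split; [split; [|split]|split].
  - rewrite -setI_eq0; apply/eqP/setP => x; rewrite !inE; by case: x.
  - by apply/setP; case => *; rewrite !inE.
  - by case=> [i|j|i| | |]; case=> [i'|j'|i'| | |] //= _; rewrite !inE; auto.
  - by rewrite inE.
  case=> [i|j|i| | |]; rewrite inE // => _.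
  - apply: star_sub; first by rewrite inE.
    by apply/subsetP; case=> [?|?|?| | |]; rewrite !inE.
  - split; first by apply/set0Pn; exists (VA q i); rewrite inE /= eqxx.
    move=> x y; rewrite !inE; case: x => // i1; case: y => // i2 /eqP -> /eqP ->.
    exact: connect0.
  - apply: star_sub; first by rewrite inE.
    by apply/subsetP; case=> [?|?|?| | |]; rewrite !inE.
move=> t; split.
  case=> J [cJ tJ].
  exists (VU p q |: [set VB p j | j in J]); split; last first.
    by rewrite cardsU1 card_imset //; [case: (_ \notin _); rewrite ?add1n ?add0n //; apply: leqW | move=> ? ? []].
  have Ucov : forall i, exists2 j, j \in J & i \in C j.
    move=> i; have : i \in \bigcup_(j in J) C j by rewrite cJ inE.
    by case/bigcupP => j jJ ij; exists j.
  have hU : forall x y, Gadj C x y -> VU p q \in closed_nbhd (Gadj C) x :|: closed_nbhd (Gadj C) y ->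
     (closed_nbhd (Gadj C) x :|: closed_nbhd (Gadj C) y) :&: (VU p q |: [set VB p j | j in J]) != set0.
    move=> x y _ H; apply/set0Pn; exists (VU p q); by rewrite inE H setU11.
  case=> [i|j|i| | |]; case=> [i'|j'|i'| | |] //= E; try (apply: hU => //; by rewrite !inE).
  - move/eqP: E => <-; case: (Ucov i) => j jJ ij.
    apply/set0Pn; exists (VB p j); rewrite inE; apply/andP; split.
      by rewrite /closed_nbhd !inE /= ij ?orbT.
    by rewrite !inE; apply/orP; right; apply/imsetP; exists j.
  - move/eqP: E => E; subst i'; case: (Ucov i) => j jJ ij.
    apply/set0Pn; exists (VB p j); rewrite inE; apply/andP; split.
      by rewrite /closed_nbhd !inE /= ij ?orbT.
    by rewrite !inE; apply/orP; right; apply/imsetP; exists j.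
case=> D [dD tD].
pose g (x : vtx p q) : option 'I_q :=
  match x with
  | VB j => Some j
  | VA i | VZ i => [pick j | i \in C j]
  | _ => None end.
pose K := g @: D.
exists [set j | Some j \in K]; split.
  apply/setP => i; rewrite inE; apply/bigcupP.
  have := dD _ _ (_ : Gadj C (VA q i) (VZ q i)); rewrite /= eqxx => /(_ isT).
  case/set0Pn => x; rewrite !inE => /andP [Hx xD].
  have pk : forall i, exists2 j, g (VA q i) = Some j & i \in C j.
    move=> i0 /=; case: pickP => [j ij|H0]; first by exists j.
    by case: (hc i0) => j; rewrite H0.
  have fin : forall x, x \in D -> forall j, g x = Some j -> i \in C j ->
     exists2 j, j \in [set j | Some j \in K] & i \in C j.
    move=> x0 x0D j gj ij; exists j => //; rewrite inE -gj; exact: imset_f.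
  move: Hx xD; case: x => [i1|j1|i1| | |] //=; rewrite ?orbF.
  - rewrite orbb => /eqP -> xD; case: (pk i) => j gj ij; exact: fin xD _ gj ij.
  - move=> H xD; exact: fin xD j1 erefl H.
  - case/orP => [/eqP <-|/eqP [->]] xD; case: (pk i) => j gj ij; exact: (fin _ xD j gj ij).
have NK : None \in K.
  have := dD _ _ (_ : Gadj C (VV p q) (VU' p q)) => /(_ isT).
  case/set0Pn => x; rewrite !inE => /andP [Hx xD].
  apply/imsetP; exists x => //.
  by move: Hx {xD}; case: x.
have h1 : #|[set j | Some j \in K]| = #|[set Some j | j in [set j | Some j \in K]]|.
  by rewrite card_imset //; move=> ? ? [].
have h2 : [set Some j | j in [set j | Some j \in K]] \subset K :\ None.
  apply/subsetP => o /imsetP [j]; rewrite !inE => jK ->; by rewrite jK.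
have h3 := cardsD1 None K; rewrite NK in h3.
have h4 : #|K| <= #|D| by apply: leq_imset_card.
rewrite h1; apply: leq_trans (subset_leq_card h2) _.
rewrite -ltnS; apply: leq_trans tD; apply: leq_trans h4; by rewrite h3 add1n.
Qed.
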